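(* Let $m\ge 3$ and $n\ge 5$ be integers, let $\Gamma=C_m\Box C_n$ with vertex set $\{0,\dots,m-1\}\times\{0,\dots,n-1\}$, and let $S$ be a disjunctive dominating set of $\Gamma$ whose column sequence $x_0,\dots,x_{n-1}$ (where $x_j=|S\cap\{(i,j):0\le i\le m-1\}|$) is proper, i.e. $x_0>0$ and $x_{n-1}=0$. Decompose $x_0,\dots,x_{n-1}$ into its blocks $X_0,\dots,X_{e-1}$, where each block is a maximal run of consecutive terms consisting of $p_i\ge1$ positive terms followed by $q_i\ge 1$ zero terms. Then $q_i\le 3$ for every $i=0,\dots,e-1$.
   Context: $C_k$ denotes the cycle with vertex set $\{0,\dots,k-1\}$, where $i,j$ are adjacent iff $i-j\equiv\pm1\pmod k$. $G\Box H$ is the Cartesian product: vertex set $V(G)\times V(H)$, with $(g,h)\sim(g',h')$ iff either $g=g'$ and $hh'\in E(H)$, or $h=h'$ and $gg'\in E(G)$. For a graph $\Gamma$ and vertex $v$, $\Gamma(v)$ is the set of vertices at distance $1$ from $v$ and $\Gamma_2(v)$ the set at distance exactly $2$. A set $S\subseteq V(\Gamma)$ is a disjunctive dominating set if every vertex $v\notin S$ satisfies $|\Gamma(v)\cap S|\ge 1$ or $|\Gamma_2(v)\cap S|\ge 2$. Blocks: for a sequence with $x_0>0$ and $x_{n-1}=0$, write it uniquely as a concatenation $X_0X_1\cdots X_{e-1}$ where $X_i=(x_{k_i+1},\dots,x_{k_i+p_i},x_{k_i+p_i+1},\dots,x_{k_i+p_i+q_i})$ with $x_{k_i+1},\dots,x_{k_i+p_i}>0$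 and $x_{k_i+p_i+1}=\dots=x_{k_i+p_i+q_i}=0$, $p_i,q_i\ge1$. *)

(* Defs.v *)
From mathcomp Require Import all_boot.
Set Implicit Arguments. Unset Strict Implicit. Unset Printing Implicit Defensive.

Definition cyc_adj (k : nat) (i j : nat) : bool :=
  (i == j.+1 %% k) || (j == i.+1 %% k).

Definition box_adj (m n : nat) : rel ('I_m * 'I_n) :=
  fun u v => ((u.1 == v.1) && cyc_adj n u.2 v.2)
          || ((u.2 == v.2) && cyc_adj m u.1 v.1).

Definition within {T : Type} (e : rel T) (k : nat) (u v : T) : Prop :=
  exists s : seq T, size s <= k /\ path e u s /\ last u s = v.

Definition at_dist {T : Type} (e : rel T) (k : nat) (u v : T) : Prop :=
  within e k u v /\ forall k', k' < k -> ~ within e k' u v.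

Definition disjunctive_dominating {T : finType} (e : rel T) (S : {set T}) : Prop :=
  forall v, v \notin S ->
    (exists w, w \in S /\ at_dist e 1 v w) \/
    (exists w1 w2, w1 != w2 /\ w1 \in S /\ w2 \in S /\
                   at_dist e 2 v w1 /\ at_dist e 2 v w2).

Definition col_count (m n : nat) (S : {set 'I_m * 'I_n}) (j : 'I_n) : nat :=
  #|[set i : 'I_m | (i, j) \in S]|.

Definition colseq (m n : nat) (S : {set 'I_m * 'I_n}) : seq nat :=
  [seq col_count S j | j <- enum 'I_n].

(* B = [:: (P_0,Q_0); ...; (P_{e-1},Q_{e-1})] is the block decomposition of s:
   s = P_0 ++ Q_0 ++ ... ++ P_{e-1} ++ Q_{e-1}, each P_i a nonempty run of
   positive terms, each Q_i a nonempty run of zero terms (so p_i = size P_i,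
   q_i = size Q_i). *)
Definition block_decomp (s : seq nat) (B : seq (seq nat * seq nat)) : Prop :=
  s = flatten [seq b.1 ++ b.2 | b <- B] /\
  forall b, b \in B ->
    [/\ 0 < size b.1, 0 < size b.2, all (fun x => 0 < x) b.1
      & all (fun x => x == 0) b.2].

(* Main.v *)
Require Import Defs.
From mathcomp Require Import all_boot.
From mathcomp Require Import zify.

Lemma adjP m n (u w : 'I_m * 'I_n) : box_adj u w ->
  (u.1 = w.1 /\ cyc_adj n u.2 w.2) \/ (u.2 = w.2 /\ cyc_adj m u.1 w.1).
Proof. by case/orP => /andP[/eqP ? ?]; [left|right]. Qed.

Lemma cycP {n a b} : a < n -> b < n -> cyc_adj n a b ->
  b = a.+1 \/ a = b.+1 \/ (a.+1 = n /\ b = 0) \/ (b.+1 = n /\ a = 0).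
Proof.
move=> ha hb /orP[]/eqP E.
- case: (ltngtP b.+1 n) => h; first by rewrite modn_small in E; lia.
  + lia.
  + by rewrite h modnn in E; lia.
- case: (ltngtP a.+1 n) => h; first by rewrite modn_small in E; lia.
  + lia.
  + by rewrite h modnn in E; lia.
Qed.

Lemma nth_colseq m n (S : {set 'I_m * 'I_n}) (j : 'I_n) :
  nth 0 (colseq S) j = col_count S j.
Proof.
rewrite /colseq (nth_map j) ?size_enum_ord //.
congr col_count; apply: val_inj => /=; by rewrite nth_enum_ord.
Qed.

Theorem lemma2 (m n : nat) (hm : 3 <= m) (hn : 5 <= n)
  (S : {set 'I_m * 'I_n})
  (hS : disjunctive_dominating (@box_adj m n) S)
  (hx0 : 0 < nth 0 (colseq S) 0)
  (hxl : nth 0 (colseq S) n.-1 = 0)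
  (B : seq (seq nat * seq nat))
  (hB : block_decomp (colseq S) B) :
  forall b, b \in B -> size b.2 <= 3.
Proof.
move=> b bB; rewrite leqNgt; apply/negP => hq.
case: hB => hs hall.
have [hp1 hq1 hpos hz] := hall b bB.
move: hs; case/splitPr: bB hall => B1 B2 hall hs.
case: b hq hp1 hq1 hpos hz hall hs => P Q /= hq hp1 hq1 hpos hz hall hs.
rewrite map_cat flatten_cat /= -catA in hs.
set A := flatten _ in hs. set R := flatten _ in hs.
have hsz : size (colseq S) = n by rewrite size_map size_enum_ord.
have hsz2 := hsz; rewrite hs !size_cat in hsz2.
change (is_true (0 < @size nat P)) in hp1.
change (is_true (3 < @size nat Q)) in hq.
change (size A + (@size nat P + (@size nat Q + size R)) = n) in hsz2.
set k := size A + @size nat P.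
have zero : forall j : 'I_n, k <= j <= k + 3 -> forall i, (i, j) \notin S.
  move=> j /andP[h1 h2] i; rewrite /k in h1 h2.
  change (is_true (size A + @size nat P <= j)) in h1; change (is_true (j <= size A + @size nat P + 3)) in h2.
  change (is_true (0 < @size nat Q)) in hq1; change (is_true (3 < @size nat Q)) in hq.
  have : nth 0 (colseq S) j = 0.
    rewrite hs nth_cat ifF; last by apply/negbTE; lia.
    rewrite nth_cat ifF; last by apply/negbTE; lia.
    rewrite nth_cat ifT; last by lia.
    apply/eqP; apply: (allP hz); apply: mem_nth; change (is_true (j - size A - @size nat P < @size nat Q)); lia.
  rewrite nth_colseq /col_count => /eqP; rewrite cards_eq0 => /eqP E.
  apply/negP => hij.
  have : i \in [set i0 : 'I_m | (i0, j) \in S] by rewrite inE.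
  by rewrite E inE.
have hk1 : 0 < k by rewrite /k; lia.
have hk2 : k + 4 <= n by move: hsz2; rewrite /k; lia.
clearbody k.
have hc : k.+1 < n by lia.
have hw : k.-1 < n by lia.
have hi0 : 0 < m by lia.
pose i0 := Ordinal hi0.
pose c := Ordinal hc.
pose v := (i0, c).
have vS : v \notin S by apply: zero => /=; lia.
have key : forall w, w \in S -> within (@box_adj m n) 2 v w ->
    w = (i0, Ordinal hw).
  move=> w wS [s [ss [ps ls]]].
  case: s ss ps ls => [|a [|b' [|? ?]]] //= ss.
  - by move=> _ E; subst w; rewrite wS in vS.
  - rewrite andbT => /adjP hva E; subst a.
    move: wS; case: w hva => [w1 w2] /= [[_ hcy]|[E _]].
    + have := cycP (ltn_ord c) (ltn_ord w2) hcy => /= H.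
      by rewrite (negbTE (zero w2 _ w1)) //; lia.
    + by subst w2; rewrite (negbTE (zero c _ w1)) //= ; lia.
  - rewrite andbT => /andP[/adjP hva /adjP hab] E; subst b'.
    move: wS; case: w hab => [w1 w2] /= hab.
    case: a hva hab => [a1 a2] /= [[E1 hcy]|[E2 _]].
    + have := cycP (ltn_ord c) (ltn_ord a2) hcy => /= H.
      subst a1.
      case=> [[E3 hcy2]|[E4 _]] wS.
      * subst w1.
        have := cycP (ltn_ord a2) (ltn_ord w2) hcy2 => H2.
        have [Ew|Ew] : (w2 : nat) = k.-1 \/ k <= w2 <= k + 3 by lia.
        -- by congr pair; apply: val_inj.
        -- by rewrite (negbTE (zero w2 Ew _)) in wS.
      * subst w2. by rewrite (negbTE (zero a2 _ w1)) in wS => //; lia.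
    + subst a2.
      case=> [[E3 hcy2]|[E4 _]] wS.
      * have := cycP (ltn_ord c) (ltn_ord w2) hcy2 => /= H2.
        by rewrite (negbTE (zero w2 _ w1)) in wS => //; lia.
      * subst w2. by rewrite (negbTE (zero c _ w1)) in wS => //=; lia.
case: (hS v vS) => [[w [wS [hw1 hw2]]]|[w1 [w2 [ne [w1S [w2S [[h1 _] [h2 _]]]]]]]].
- clear hw2; case: hw1 => s [ss [ps ls]].
  case: s ss ps ls => [|a [|? ?]] //= ss.
  + by move=> _ E; subst w; rewrite wS in vS.
  + rewrite andbT => /adjP hva E; subst a.
    move: wS; case: w hva => [w1 w2] /= [[_ hcy]|[E _]].
    * have := cycP (ltn_ord c) (ltn_ord w2) hcy => /= H.
      by rewrite (negbTE (zero w2 _ w1)) //; lia.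
    * by subst w2; rewrite (negbTE (zero c _ w1)) //= ; lia.
- by rewrite (key _ w1S h1) (key _ w2S h2) eqxx in ne.
Qed.
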